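(* Let $\alpha\in(0,1)$ and let $n\ge r\ge 1$ be integers. If $P\in\mathbb{P}_\alpha^{n\times n}$, then for every matrix $M\in\mathbb{R}^{n\times r}$ with $\operatorname{rank}(M)=r$ one has $M^{\mathrm T}PM\in\mathbb{P}_\alpha^{r\times r}$.
   Context: For $\alpha\in(0,1)$ and a positive integer $k$, the set of $k$-dimensional fractional order positive definite matrices is $\mathbb{P}_\alpha^{k\times k}=\Big\{\sin\big(\tfrac{\alpha\pi}{2}\big)X+\cos\big(\tfrac{\alpha\pi}{2}\big)Y:\ X,Y\in\mathbb{R}^{k\times k},\ \begin{bmatrix}X&Y\\-Y&X\end{bmatrix}>0\Big\}$, where ''$>0$'' means the (symmetric) block matrix is positive definite. *)

(* Defs.v *)
From mathcomp Require Import all_boot all_order all_algebra.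
From mathcomp Require Import all_classical all_reals all_analysis.
Set Implicit Arguments. Unset Strict Implicit. Unset Printing Implicit Defensive.
Import Order.TTheory GRing.Theory Num.Theory.
Local Open Scope ring_scope.

Definition posdef (R : realType) (m : nat) (A : 'M[R]_m) : Prop :=
  A^T = A /\ forall x : 'cV[R]_m, x != 0 -> 0 < (x^T *m A *m x) ord0 ord0.

Definition frac_posdef (R : realType) (alpha : R) (k : nat) (P : 'M[R]_k) : Prop :=
  exists X Y : 'M[R]_k,
    posdef (block_mx X Y (- Y) X) /\
    P = sin (alpha * pi / 2) *: X + cos (alpha * pi / 2) *: Y.

(* Main.v *)
Require Import Defs.
From mathcomp Require Import all_boot all_order all_algebra.
From mathcomp Require Import all_classical all_reals all_analysis.
Import Order.TTheory GRing.Theory Num.Theory.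
Local Open Scope ring_scope.

Lemma inj_full (R : realType) n r (M : 'M[R]_(n, r)) (x : 'cV[R]_r) :
  \rank M = r -> M *m x = 0 -> x = 0.
Proof.
move=> hM hx.
have rf : row_free (M^T) by rewrite /row_free mxrank_tr hM.
have := @row_free_inj R 1 r n M^T rf (x^T) 0.
rewrite mul0mx -trmx_mul hx trmx0 => /(_ erefl) h.
by rewrite -(trmxK x) h trmx0.
Qed.

Lemma congr_posdef (R : realType) n r (A : 'M[R]_n) (B : 'M[R]_(n, r)) :
  posdef A -> (forall x : 'cV[R]_r, B *m x = 0 -> x = 0) ->
  posdef (B^T *m A *m B).
Proof.
move=> [hs hp] hB; split.
  by rewrite !trmx_mul trmxK hs mulmxA.
move=> x hx.
have -> : x^T *m (B^T *m A *m B) *m x = (B *m x)^T *m A *m (B *m x).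
  by rewrite trmx_mul !mulmxA.
apply: hp; apply/negP => /eqP /hB /eqP; exact/negP.
Qed.

Theorem theorem1 (R : realType) (alpha : R) (n r : nat)
  (halpha : 0 < alpha < 1) (hr : (1 <= r)%N) (hrn : (r <= n)%N)
  (P : 'M[R]_n) (M : 'M[R]_(n, r)) :
  frac_posdef alpha P -> \rank M = r -> frac_posdef alpha (M^T *m P *m M).
Proof.
move=> [X [Y [hpd ->]]] hM.
exists (M^T *m X *m M), (M^T *m Y *m M); split; last first.
  by rewrite mulmxDr mulmxDl -!scalemxAr -!scalemxAl.
set B := block_mx M 0 0 M : 'M[R]_(n + n, r + r).
have -> : block_mx (M^T *m X *m M) (M^T *m Y *m M) (- (M^T *m Y *m M)) (M^T *m X *m M)
   = B^T *m block_mx X Y (- Y) X *m B.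
  rewrite /B tr_block_mx !trmx0 !mulmx_block.
  by rewrite !mulmx0 !mul0mx !addr0 !add0r !mulmxN !mulNmx.
apply: congr_posdef => // x hx.
rewrite -(vsubmxK x) in hx *.
rewrite /B mul_block_col !mul0mx addr0 add0r in hx.
move/eqP: hx; rewrite col_mx_eq0 => /andP [/eqP h1 /eqP h2].
by rewrite (inj_full _ _ _ _ _ hM h1) (inj_full _ _ _ _ _ hM h2) col_mx0.
Qed.
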